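(* Let $\mu>0$ and fix $s\in\mathcal{S}$. Suppose the quasi-optimal action-value function is concavely quadratic in the action: $Q^{*}_{\mu}(s,a)=-\alpha_1 a^2+\alpha_2 a+\alpha_3$ for all $a\in\mathbb{R}$, with constants (depending on $s$) $\alpha_1>0$, $\alpha_2,\alpha_3\in\mathbb{R}$. Let $\pi^{*}_{\mu}(\cdot\mid s)$ be the induced policy, i.e. a probability density on $\mathbb{R}$ whose support $\mathcal{W}_s$ (closure of $\{a:\pi^{*}_{\mu}(a\mid s)>0\}$) satisfies $0<\sigma(\mathcal{W}_s)<\infty$ and such that for all $a\in\mathbb{R}$ $$\pi^{*}_{\mu}(a\mid s)=\Big(\frac{Q^{*}_{\mu}(s,a)}{2\mu}-\frac{\int_{\mathcal{W}_s}Q^{*}_{\mu}(s,a')\,da'}{2\mu\,\sigma(\mathcal{W}_s)}+\frac{1}{\sigma(\mathcal{W}_s)}\Big)^{+}.$$ Then $\pi^{*}_{\mu}(\cdot\mid s)$ is a $q$-Gaussian density $$\pi^{*}_{\mu}(a\mid s)=\Big(\frac{3}{2}\Big(\frac{\alpha_1}{12\mu}\Big)^{1/3}-\frac{\alpha_1}{2\mu}\Big(a-\frac{\alpha_2}{2\alpha_1}\Big)^2\Big)^{+},$$ with support $$\mathcal{W}_s=\Big[\frac{\alpha_2-(12\alpha_1^2\mu)^{1/3}}{2\alpha_1},\ \frac{\alpha_2+(12\alpha_1^2\mu)^{1/3}}{2\alpha_1}\Big].$$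
   Context: $\sigma$ denotes Lebesgue measure on $\mathbb{R}$ and $x^{+}=\max(x,0)$. The action space is $\mathcal{A}=\mathbb{R}$. $Q^{*}_{\mu}$ is the quasi-optimal action-value function of a Markov decision process, here assumed to have the stated quadratic form at the state $s$. *)

(* Defs.v *)
From HB Require Import structures.
From mathcomp Require Import all_boot all_order all_algebra.
From mathcomp Require Import all_classical all_reals all_analysis.
Set Implicit Arguments. Unset Strict Implicit. Unset Printing Implicit Defensive.
Import Order.TTheory GRing.Theory Num.Theory numFieldNormedType.Exports.
Local Open Scope classical_set_scope.
Local Open Scope ring_scope.

Definition pospart {R : realType} (x : R) : R := Num.max x 0.

Definition Wsupp {R : realType} (p : R -> R) : set R :=
  closure [set a | 0 < p a].

(* Main.v *)
Require Import Defs.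
From HB Require Import structures.
From mathcomp Require Import all_boot all_order all_algebra.
From mathcomp Require Import all_classical all_reals all_analysis.
Import Order.TTheory GRing.Theory Num.Theory numFieldNormedType.Exports.
Local Open Scope classical_set_scope.
Local Open Scope ring_scope.
From mathcomp Require Import ring lra.

Section S.
Variable R : realType.
Implicit Types K b m r x : R.

Lemma polyF_der K b m x :
  is_derive x (1:R) (fun y : R => K * y - b / 3 * (y - m) ^+ 3) (K - b * (x - m) ^+ 2).
Proof.
apply: is_derive_eq.
rewrite subr0 !scaler1 /GRing.scale/=. by field.
Qed.

Lemma cube_root (x y : R) : 0 <= x -> 0 <= y -> y ^+ 3 = x -> x `^ 3^-1 = y.
Proof.
move=> x0 y0 <-.
rewrite -(powR_mulrn 3 y0) -powRrM mulfV ?powRr1 //.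
Qed.

Lemma aux1 (b r t : R) : 0 < b -> -r <= t -> t <= r -> 0 <= b*r^+2 - b*t^+2.
Proof.
move=> b0 h1 h2.
have h : 0 <= (r - t) * (r + t) by apply: mulr_ge0; lra.
have := mulr_ge0 (ltW b0) h. 
have -> : b * ((r - t) * (r + t)) = b*r^+2 - b*t^+2 by ring.
by [].
Qed.
Lemma aux0 (b r t : R) : 0 < b -> 0 <= r -> (t <= -r \/ r <= t) -> b*r^+2 - b*t^+2 <= 0.
Proof.
move=> b0 r0 h.
have h' : 0 <= (t - r) * (t + r).
  case: h => h; [rewrite -mulrNN; apply: mulr_ge0 | apply: mulr_ge0]; lra.
have := mulr_ge0 (ltW b0) h'.
have -> : b * ((t - r) * (t + r)) = - (b*r^+2 - b*t^+2) by ring.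
by rewrite oppr_ge0.
Qed.
Lemma aux3 (b r t : R) : 0 < b -> 0 < r -> (0 < b*r^+2 - b*t^+2) = (-r < t < r).
Proof.
move=> b0 r0.
apply/idP/idP.
  move=> h; case: (ltP (-r) t) => h1; case: (ltP t r) => h2 //=.
  - by have := @aux0 b r t b0 (ltW r0) (or_intror h2); lra.
  - by have := @aux0 b r t b0 (ltW r0) (or_introl h1); lra.
  - by have := @aux0 b r t b0 (ltW r0) (or_introl h1); lra.
move=> /andP[h1 h2].
have h : 0 < (r - t) * (r + t) by apply: mulr_gt0; lra.
have := mulr_gt0 b0 h.
have -> : b * ((r - t) * (r + t)) = b*r^+2 - b*t^+2 by ring.
by [].
Qed.

Lemma int_poly K b m r : 0 < r ->
  (\int[lebesgue_measure]_(x in `[(m - r)%R, (m + r)%R]) (K - b * ((x:R) - m) ^+ 2)%:E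
   = (2 * K * r - 2 * b / 3 * r ^+ 3)%:E)%E.
Proof.
move=> r0.
pose F := fun y : R => K * y - b / 3 * (y - m) ^+ 3.
have dF x : is_derive x (1:R) F (K - b * (x - m) ^+ 2) by exact: polyF_der.
have cF : continuous F.
  by move=> x; apply/differentiable_continuous/derivable1_diffP; by case: (dF x).
have cg : continuous (fun x : R => K - b * (x - m) ^+ 2).
  by move=> x; apply/differentiable_continuous/derivable1_diffP.
have ab : m - r < m + r by lra.
have cw : {within `[m - r, m + r], continuous (fun x : R => K - b * (x - m) ^+ 2)}.
  exact: continuous_subspaceT.
have dc : derivable_oo_LRcontinuous F (m - r) (m + r).
  split.
  + by move=> x _; case: (dF x).
  + exact/cvg_at_right_filter/cF.
  + exact/cvg_at_left_filter/cF.
have dd : {in `]m - r, m + r[, F^`()%classic =1 (fun x : R => K - b * (x - m) ^+ 2)}.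
  by move=> x _; rewrite derive1E derive_val.
rewrite (continuous_FTC2 ab cw dc dd).
rewrite -EFinB /F; congr (_%:E); by field.
Qed.
End S.

Theorem theorem2 (R : realType) (mu : R) (Q pi : R -> R)
  (alpha1 alpha2 alpha3 : R) :
  0 < mu ->
  0 < alpha1 ->
  (forall a, Q a = - alpha1 * a ^+ 2 + alpha2 * a + alpha3) ->
  (* pi is a probability density on R *)
  measurable_fun setT pi ->
  (forall a, 0 <= pi a) ->
  (\int[lebesgue_measure]_(a in setT) (pi a)%:E = 1)%E ->
  (* 0 < sigma(W_s) < oo *)
  (0 < lebesgue_measure (Wsupp pi) < +oo)%E ->
  (* the integral of Q over W_s is a (finite) real number *)
  (\int[lebesgue_measure]_(a in Wsupp pi) (Q a)%:E)%E \is a fin_num ->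
  (forall a, pi a =
     pospart (Q a / (2 * mu)
       - fine (\int[lebesgue_measure]_(a' in Wsupp pi) (Q a')%:E)%E
           / (2 * mu * fine (lebesgue_measure (Wsupp pi)))
       + (fine (lebesgue_measure (Wsupp pi)))^-1)) ->
  (forall a, pi a =
     pospart (3 / 2 * (alpha1 / (12 * mu)) `^ (3^-1)
              - alpha1 / (2 * mu) * (a - alpha2 / (2 * alpha1)) ^+ 2))
  /\
  Wsupp pi =
    `[(alpha2 - (12 * alpha1 ^+ 2 * mu) `^ (3^-1)) / (2 * alpha1),
      (alpha2 + (12 * alpha1 ^+ 2 * mu) `^ (3^-1)) / (2 * alpha1)]%classic.
Proof.
move=> mu0 a10 hQ _ _ hint _ _ hpi0.
set C := fine _ / _ in hpi0.
set D := (fine _)^-1 in hpi0.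
set beta := alpha1 / (2 * mu).
set m := alpha2 / (2 * alpha1).
set K := (alpha2 ^+ 2 / (4 * alpha1) + alpha3) / (2 * mu) - C + D.
have b0 : 0 < beta by rewrite /beta divr_gt0 // mulr_gt0.
have hpi a : pi a = pospart (K - beta * (a - m) ^+ 2).
  rewrite hpi0 hQ /K /beta /m; congr pospart.
  field; lra.
have [K0|Kpos] := leP K 0.
  exfalso.
  have : (\int[lebesgue_measure]_(a in setT) (pi a)%:E = 0)%E.
    rewrite (eq_integral (cst 0%E)) ?integral0 // => a _.
    rewrite hpi /pospart; congr (_%:E).
    apply/max_r; have := sqr_ge0 (a - m); nra.
  by rewrite hint => -[] /eqP; rewrite oner_eq0.
pose r := Num.sqrt (K / beta).
have r0 : 0 < r by rewrite sqrtr_gt0 divr_gt0.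
have Kr : K = beta * r ^+ 2.
  rewrite sqr_sqrtr; last by rewrite divr_ge0 // ltW.
  by field; lra.
have hpi2 a : (pi a)%:E = (((fun x : R => (K - beta * (x - m) ^+ 2)%:E) \_ `[(m - r)%R, (m + r)%R]) a).
  rewrite patchE hpi /pospart Kr.
  case: ifPn.
    rewrite inE /= in_itv /= => /andP[h1 h2]; congr (_%:E); apply/max_l.
    by apply: aux1 => //; lra.
  rewrite notin_setE /= in_itv /= => h.
  have -> : point = 0%E :> \bar R by [].
  congr (_%:E); apply/max_r.
  apply: aux0 => //; first exact: ltW.
  case: (ltP a (m - r)) => h1; first by left; lra.
  case: (ltP (m + r) a) => h2; first by right; lra.
  by exfalso; apply: h; rewrite h1 h2.
have hI : (\int[lebesgue_measure]_(a in setT) (pi a)%:E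
          = (2 * K * r - 2 * beta / 3 * r ^+ 3)%:E)%E.
  under eq_integral => a _ do rewrite hpi2.
  rewrite -integral_mkcond.
  exact: int_poly.
rewrite hint in hI; case: hI => hI.
have r3 : r ^+ 3 = 3 / (4 * beta).
  rewrite Kr in hI.
  have h4 : r ^+ 3 * (4 * beta) = 3.
    apply/eqP; rewrite -subr_eq0.
    have -> : r ^+ 3 * (4 * beta) - 3 = 3 * ((2 * (beta * r ^+ 2) * r - 2 * beta / 3 * r ^+ 3) - 1) by field.
    by rewrite -hI subrr mulr0.
  by rewrite -h4 mulfK // mulf_neq0 // gt_eqF.
have hK0 : 3 / 2 * (alpha1 / (12 * mu)) `^ 3^-1 = K.
  rewrite (@cube_root _ _ (2 / 3 * K)); first by field.
  - by apply: divr_ge0; [exact: ltW | rewrite mulr_ge0 // ltW].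
  - by rewrite mulr_ge0 // ltW.
  rewrite Kr.
  have -> : (2 / 3 * (beta * r ^+ 2)) ^+ 3 = 8 / 27 * beta ^+ 3 * (r ^+ 3) ^+ 2 by field.
  rewrite r3 /beta; field; lra.
have hE : (12 * alpha1 ^+ 2 * mu) `^ 3^-1 = 2 * alpha1 * r.
  rewrite (@cube_root _ _ (2 * alpha1 * r)) //.
  - by rewrite !mulr_ge0 // ltW.
  - by rewrite !mulr_ge0 // ltW.
  have -> : (2 * alpha1 * r) ^+ 3 = 8 * alpha1 ^+ 3 * r ^+ 3 by ring.
  rewrite r3 /beta; field; lra.
rewrite hK0 hE; split => //.
have -> : (alpha2 - 2 * alpha1 * r) / (2 * alpha1) = m - r by rewrite /m; field; lra.
have -> : (alpha2 + 2 * alpha1 * r) / (2 * alpha1) = m + r by rewrite /m; field; lra.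
rewrite -closed_ball_itv // -closure_ballE /Wsupp; congr closure.
rewrite ball_itv; apply/seteqP; split => a /=; rewrite in_itv /= hpi /pospart Kr lt_max ltxx orbF aux3 //.
  by move=> /andP[h1 h2]; apply/andP; split; lra.
by move=> /andP[h1 h2]; apply/andP; split; lra.
Qed.
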